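(* Fix a user $n$ and a server $m$, and fix constants $x_{n,m}\in\{0,1\}$, $\varphi_n\in[0,1]$, $d_n>0$, $\eta_m>0$, $\zeta_{n,m}\in(0,1]$, $f_m>0$, $\kappa_m>0$, $\omega_t\ge 0$, $\omega_e\ge 0$, and set $\omega_b=1$. For $\gamma_{n,m}\in(0,1)$ define $T^{(sp)}_{n,m}=\frac{x_{n,m}\varphi_n d_n\eta_m}{\gamma_{n,m}\zeta_{n,m}f_m}$, $T^{(sg)}_{n,m}=\frac{x_{n,m}\varphi_n d_n\omega_b\eta_m}{(1-\gamma_{n,m})\zeta_{n,m}f_m}$, $E^{(sp)}_{n,m}=\kappa_m x_{n,m}\varphi_n d_n\eta_m(\gamma_{n,m}\zeta_{n,m}f_m)^2$, $E^{(sg)}_{n,m}=\kappa_m x_{n,m}\varphi_n d_n\eta_m\omega_b\big[(1-\gamma_{n,m})\zeta_{n,m}f_m\big]^2$, and let $h(\gamma_{n,m})=\omega_t\big(T^{(sp)}_{n,m}+T^{(sg)}_{n,m}\big)+\omega_e\big(E^{(sp)}_{n,m}+E^{(sg)}_{n,m}\big)$ be the part of the server cost of user $n$ at server $m$ that depends on $\gamma_{n,m}$ when the block validation delay is disregarded. Then $\gamma_{n,m}^\star=\tfrac12$ is an optimal value of $\gamma_{n,m}$, i.e. $h(\tfrac12)\le h(\gamma_{n,m})$ for all $\gamma_{n,m}\in(0,1)$.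
   Context: Setting: a blockchain-enabled Metaverse system where user $n$ offloads a fraction $\varphi_n$ of its $d_n$ data bits to server $m$ (association indicator $x_{n,m}$). Server $m$ has maximum computing resource $f_m$ (cycles/s), allocates a fraction $\zeta_{n,m}$ of it to user $n$, and splits this allocation into a fraction $\gamma_{n,m}\in(0,1)$ used for processing the offloaded data and a fraction $1-\gamma_{n,m}$ used for generating the blockchain block. $\eta_m$ is the number of CPU cycles per bit at server $m$, $\kappa_m$ the effective switched capacitance of the server chip, $\omega_b$ the data size changing ratio between the offloaded data and the blockchain task, and $\omega_t,\omega_e$ the weights of delay and energy in the cost. $T^{(sp)},E^{(sp)}$ are the server processing delay and energy, and $T^{(sg)},E^{(sg)}$ the block generation delay and energy. *)

(* Defs.v *)
From Stdlib Require Import Reals.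
Open Scope R_scope.

(* Data size changing ratio, fixed to 1 in the lemma. *)
Definition omega_b : R := 1.

Definition T_sp (x phi d eta zeta f gamma : R) : R :=
  x * phi * d * eta / (gamma * zeta * f).
Definition T_sg (x phi d eta zeta f wb gamma : R) : R :=
  x * phi * d * wb * eta / ((1 - gamma) * zeta * f).
Definition E_sp (kappa x phi d eta zeta f gamma : R) : R :=
  kappa * x * phi * d * eta * (gamma * zeta * f) ^ 2.
Definition E_sg (kappa x phi d eta zeta f wb gamma : R) : R :=
  kappa * x * phi * d * eta * wb * ((1 - gamma) * zeta * f) ^ 2.

Definition h (wt we kappa x phi d eta zeta f wb gamma : R) : R :=
  wt * (T_sp x phi d eta zeta f gamma + T_sg x phi d eta zeta f wb gamma)
  + we * (E_sp kappa x phi d eta zeta f gamma + E_sg kappa x phi d eta zeta f wb gamma).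

(* Main.v *)
Require Import Defs.
From Stdlib Require Import Reals Lra Psatz.
Open Scope R_scope.

Theorem lemma4 (x phi d eta zeta f kappa wt we : R)
  (hx : x = 0 \/ x = 1) (hphi : 0 <= phi <= 1) (hd : 0 < d) (heta : 0 < eta)
  (hzeta : 0 < zeta <= 1) (hf : 0 < f) (hkappa : 0 < kappa)
  (hwt : 0 <= wt) (hwe : 0 <= we) :
  forall gamma : R, 0 < gamma < 1 ->
    h wt we kappa x phi d eta zeta f omega_b (1 / 2)
    <= h wt we kappa x phi d eta zeta f omega_b gamma.
Proof.
  intros g hg.
  assert (hK : 0 <= x * phi * d * eta).
  { destruct hx as [-> | ->]; [lra|].
    apply Rmult_le_pos; [apply Rmult_le_pos; [lra|lra]|lra]. }
  set (K := x * phi * d * eta) in *.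
  set (a := zeta * f).
  assert (ha : 0 < a) by (unfold a; nra).
  assert (hT : forall g, 0 < g < 1 ->
    T_sp x phi d eta zeta f g + T_sg x phi d eta zeta f omega_b g
    = K / a * / (g * (1 - g))).
  { intros g0 hg0. unfold T_sp, T_sg, omega_b, K, a.
    field. repeat split; lra. }
  assert (hE : forall g,
    E_sp kappa x phi d eta zeta f g + E_sg kappa x phi d eta zeta f omega_b g
    = kappa * K * a ^ 2 * (g ^ 2 + (1 - g) ^ 2)).
  { intros g0. unfold E_sp, E_sg, omega_b, K, a. ring. }
  unfold h. rewrite !hT by lra. rewrite !hE.
  assert (h1 : / ((1/2) * (1 - 1/2)) <= / (g * (1 - g))).
  { apply Rinv_le_contravar; [apply Rmult_lt_0_compat; lra | pose proof (Rle_0_sqr (g - 1/2)); unfold Rsqr in *; nra]. }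
  assert (h2 : 0 <= K / a).
  { unfold Rdiv. apply Rmult_le_pos; [lra|]. left; apply Rinv_0_lt_compat; lra. }
  assert (h3 : 0 <= kappa * K * a ^ 2).
  { apply Rmult_le_pos; [nra|]. nra. }
  apply Rplus_le_compat.
  - apply Rmult_le_compat_l; [lra|]. apply Rmult_le_compat_l; lra.
  - apply Rmult_le_compat_l; [lra|]. apply Rmult_le_compat_l; [lra|]. pose proof (Rle_0_sqr (g - 1/2)); unfold Rsqr in *; nra.
Qed.
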